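(* Let $\alpha:\Sigma^\Delta\to(H_1,V_1)$ and $\beta:\Sigma^\Delta\to(H_2,V_2)$ be surjective morphisms onto finite forest algebras, and suppose the derived forest category $C=D_{\alpha,\beta}$ is locally distributive. Then $C$ divides some finite distributive forest algebra.
   Context: Forest algebras $(H,V)$: $H$ is an additive monoid, $V$ is a monoid acting faithfully on $H$, there are insertion elements $I_h\in V$ with $I_h h'=h+h'$, and every $h$ is of the form $v\cdot 0$. All forest algebras are horizontally commutative and idempotent. We write $h+v$ for $I_h v$. $\Sigma^\Delta=(H_\Sigma,V_\Sigma)$ is the free forest algebra over the finite alphabet $\Sigma$: forests are finite sets of unordered trees, and contexts are forests with one leaf replaced by a hole. $(H,V)$ is distributive if $v(h_1+h_2)=vh_1+vh_2$. Derived forest category $D_{\alpha,\beta}$. Its objects are the elements of $H_2$. For $h,h'\in H_2$, the arrows from $h$ to $h'$ are equivalence classes $[h,p,h']$ of triples with $p\in V_\Sigma$ and $\beta(p)h=h'$, where $(h,p,h')\sim(h,q,h')$ iff $\alpha(ps)=\alpha(qs)$ for all $s\in H_\Sigma$ with $\beta(s)=h$. Composition is $[h_2,p,h_3]\cdot[h_1,q,h_2]=[h_1,pq,h_3]$, with identities $[h,1,h]$. Half-arrows ending at $h$ are pairs $(\alpha(s),h)$ with $s\in H_\Sigma$ and $\beta(s)=h$. Sums of half-arrows are taken componentwise. The action of an arrow on a half-arrow is $[h,p,h']\cdot(h_1,h)=(\alpha(p)h_1,h')$. The sum of an arrow and a half-arrow is $[h,p,h']+(\alpha(s),\beta(s))=[h,\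 p+s,\ h'+\beta(s)]$, where $p+s$ is the context $p$ with the forest $s$ added at top level; sums in the other order are analogous. $C$ is locally distributive if for every object $h$, all half-arrows $x_1,x_2$ ending at $h$, and every arrow $v$ from $h$ to some $h'$, we have $v\cdot(x_1+x_2)=v\cdot x_1+v\cdot x_2$. $C$ divides a forest algebra $(H,V)$ if there exist a nonempty set $K_x\subseteq H$ for each half-arrow $x$ and a nonempty set $K_e\subseteq V$ for each arrow $e$ satisfying the following conditions. Preservation of operations: - $K_fK_e\subseteq K_{fe}$ for composable arrows; - $K_eK_x\subseteq K_{e\cdot x}$ when the arrow $e$ starts at the endpoint of the half-arrow $x$; - $K_x+K_y\subseteq K_{x+y}$; - $K_x+K_f\subseteq K_{x+f}$ and $K_f+K_x\subseteq K_{f+x}$ for half-arrows $x,y$ and arrows $f$. Injectivity: - distinct arrows with the same source and target have disjoint sets; - distinct half-arrows with the same end object have disjoint sets. *)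

(* Defs.v *)
From mathcomp Require Import all_boot.
Set Implicit Arguments. Unset Strict Implicit. Unset Printing Implicit Defensive.

Record fa_ops := FAOps {
  faH : finType;
  faV : finType;
  fa_add : faH -> faH -> faH;
  fa_zero : faH;
  fa_mul : faV -> faV -> faV;
  fa_one : faV;
  fa_act : faV -> faH -> faH;
  fa_ins : faH -> faV
}.

Definition is_forest_algebra (A : fa_ops) : Prop :=
  (forall x y z : faH A, fa_add x (fa_add y z) = fa_add (fa_add x y) z) /\
  (forall x y : faH A, fa_add x y = fa_add y x) /\
  (forall x, fa_add (fa_zero A) x = x) /\
  (forall x : faH A, fa_add x x = x) /\
  (forall u v w : faV A, fa_mul u (fa_mul v w) = fa_mul (fa_mul u v) w) /\
  (forall v, fa_mul (fa_one A) v = v /\ fa_mul v (fa_one A) = v) /\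
  (forall h, fa_act (fa_one A) h = h) /\
  (forall (v w : faV A) (h : faH A), fa_act (fa_mul v w) h = fa_act v (fa_act w h)) /\
  (forall v w : faV A, (forall h, fa_act v h = fa_act w h) -> v = w) /\
  (forall h h' : faH A, fa_act (fa_ins h) h' = fa_add h h') /\
  (forall h, exists v, fa_act v (fa_zero A) = h).

Definition fa_distributive (A : fa_ops) : Prop :=
  forall (v : faV A) (h1 h2 : faH A),
    fa_act v (fa_add h1 h2) = fa_add (fa_act v h1) (fa_act v h2).

(* h + v := I_h v  (and, by horizontal commutativity, v + h is the same) *)
Definition fa_hplusv (A : fa_ops) (h : faH A) (v : faV A) : faV A :=
  fa_mul (fa_ins h) v.

(* The free forest algebra Sigma^Delta, presented by syntax.            *)
Inductive tree (S : Type) := Node of S & seq (tree S).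
Definition forest (S : Type) := seq (tree S).

(* CHole l r     =  l + [] + r
   CNode l a c r =  l + a(c) + r *)
Inductive ctx (S : Type) :=
  | CHole of forest S & forest S
  | CNode of forest S & S & ctx S & forest S.

Arguments CHole {S}.
Arguments CNode {S}.

Definition ctx_one (S : Type) : ctx S := CHole [::] [::].

Fixpoint fill (S : Type) (c : ctx S) (f : forest S) : forest S :=
  match c with
  | CHole l r => l ++ f ++ r
  | CNode l a c' r => l ++ Node a (fill c' f) :: r
  end.

Definition ctx_side (S : Type) (l : forest S) (d : ctx S) (r : forest S) : ctx S :=
  match d with
  | CHole l' r' => CHole (l ++ l') (r' ++ r)
  | CNode l' a c r' => CNode (l ++ l') a c (r' ++ r)
  end.

Fixpoint ctx_comp (S : Type) (c d : ctx S) : ctx S :=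
  match c with
  | CHole l r => ctx_side l d r
  | CNode l a c' r => CNode l a (ctx_comp c' d) r
  end.

Definition ctx_plus_forest (S : Type) (p : ctx S) (s : forest S) := ctx_side [::] p s.
Definition forest_plus_ctx (S : Type) (s : forest S) (p : ctx S) := ctx_side s p [::].

Record fmorph (S : Type) (A : fa_ops) := FMorph {
  mH : forest S -> faH A;
  mV : ctx S -> faV A
}.

Definition is_morphism (S : Type) (A : fa_ops) (m : fmorph S A) : Prop :=
  [/\ mH m [::] = fa_zero A,
      (forall f g, mH m (f ++ g) = fa_add (mH m f) (mH m g)),
      mV m (ctx_one S) = fa_one A,
      (forall c d, mV m (ctx_comp c d) = fa_mul (mV m c) (mV m d)) &
      (forall c f, mH m (fill c f) = fa_act (mV m c) (mH m f))].

Definition is_surjective_morphism (S : Type) (A : fa_ops) (m : fmorph S A) : Prop :=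
  [/\ is_morphism m,
      (forall h : faH A, exists s, mH m s = h) &
      (forall v : faV A, exists p, mV m p = v)].

(* An arrow [h,p,h'] is represented by a triple (h,p,h') with            *)
(* beta(p) h = h'; triples are identified up to [arrow_equiv].           *)
(* A half-arrow ending at h is a pair (alpha(s), h) with beta(s) = h.    *)
Section Derived.
Variables (S : Type) (A1 A2 : fa_ops) (al : fmorph S A1) (be : fmorph S A2).

Definition is_arrow (h : faH A2) (p : ctx S) (h' : faH A2) : Prop :=
  fa_act (mV be p) h = h'.

Definition arrow_equiv (h : faH A2) (p q : ctx S) : Prop :=
  forall s, mH be s = h -> mH al (fill p s) = mH al (fill q s).

Definition is_half_arrow (x : faH A1 * faH A2) : Prop :=
  exists s, mH al s = x.1 /\ mH be s = x.2.

Definition half_sum (x y : faH A1 * faH A2) : faH A1 * faH A2 :=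
  (fa_add x.1 y.1, fa_add x.2 y.2).

Definition arrow_act (p : ctx S) (h' : faH A2) (x : faH A1 * faH A2)
  : faH A1 * faH A2 := (fa_act (mV al p) x.1, h').

Definition locally_distributive : Prop :=
  forall (h h' : faH A2) (p : ctx S), is_arrow h p h' ->
  forall x1 x2, is_half_arrow x1 -> is_half_arrow x2 -> x1.2 = h -> x2.2 = h ->
    arrow_act p h' (half_sum x1 x2) = half_sum (arrow_act p h' x1) (arrow_act p h' x2).

Definition divides (B : fa_ops) : Prop :=
  exists (KH : faH A1 * faH A2 -> {set faH B})
         (KV : faH A2 -> ctx S -> faH A2 -> {set faV B}),
  (
   (forall x, is_half_arrow x -> KH x != set0) /\
   (forall h p h', is_arrow h p h' -> KV h p h' != set0) /\
   (* K_e depends only on the arrow (the equivalence class) *)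
   (forall h p q h', is_arrow h p h' -> is_arrow h q h' ->
      arrow_equiv h p q -> KV h p h' = KV h q h') /\
   (forall h1 h2 h3 p q, is_arrow h2 p h3 -> is_arrow h1 q h2 ->
      forall v w, v \in KV h2 p h3 -> w \in KV h1 q h2 ->
        fa_mul v w \in KV h1 (ctx_comp p q) h3) /\
   (forall h p h' x, is_arrow h p h' -> is_half_arrow x -> x.2 = h ->
      forall v k, v \in KV h p h' -> k \in KH x ->
        fa_act v k \in KH (arrow_act p h' x)) /\
   (forall x y, is_half_arrow x -> is_half_arrow y ->
      forall k l, k \in KH x -> l \in KH y -> fa_add k l \in KH (half_sum x y)) /\
   (forall s h p h', is_arrow h p h' ->
      forall k v, k \in KH (mH al s, mH be s) -> v \in KV h p h' ->
        fa_hplusv k v \in KV h (forest_plus_ctx s p) (fa_add (mH be s) h') /\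
        fa_hplusv k v \in KV h (ctx_plus_forest p s) (fa_add h' (mH be s))) /\
   (forall h p q h', is_arrow h p h' -> is_arrow h q h' -> ~ arrow_equiv h p q ->
      [disjoint KV h p h' & KV h q h']) /\
   (forall x y, is_half_arrow x -> is_half_arrow y -> x.2 = y.2 -> x <> y ->
      [disjoint KH x & KH y])).

End Derived.

(* Main.v *)
Require Import Defs.
From mathcomp Require Import all_boot.
From Stdlib Require Import ClassicalEpsilon.
Set Implicit Arguments. Unset Strict Implicit. Unset Printing Implicit Defensive.

Definition pb (P : Prop) : bool := if excluded_middle_informative P then true else false.
Lemma pbP (P : Prop) : reflect P (pb P).
Proof. by rewrite /pb; case: excluded_middle_informative => H; constructor. Qed.

Section Enc.
Variables (X : finType) (op : X -> X -> X).
Hypotheses (opA : forall x y z, op x (op y z) = op (op x y) z)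
  (opC : forall x y, op x y = op y x) (opI : forall x, op x x = x).

Definition le x z := op x z == z.
Definition enc (x : X) : {set option X} :=
  [set z | if z is Some z' then ~~ le x z' else true].

Lemma le_refl x : le x x. Proof. by rewrite /le opI. Qed.

Lemma le_join x y z : le (op x y) z = le x z && le y z.
Proof.
rewrite /le; apply/eqP/andP.
- move=> H; split; apply/eqP.
  + by rewrite -{1}H !opA opI H.
  + have H' : op (op y x) z = z by rewrite (opC y).
    by rewrite -{1}H' !opA opI H'.
- by case=> /eqP Hx /eqP Hy; rewrite -opA Hy Hx.
Qed.

Lemma le_trans x y z : le x y -> le y z -> le x z.
Proof. by move=> /eqP H1 /eqP H2; apply/eqP; rewrite -H2 opA H1. Qed.

Lemma le_antisym x y : le x y -> le y x -> x = y.
Proof. by move=> /eqP H1 /eqP H2; rewrite -H1 opC H2. Qed.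

Lemma in_enc x z : (Some z \in enc x) = ~~ le x z.
Proof. by rewrite inE. Qed.

Lemma None_enc x : None \in enc x.
Proof. by rewrite inE. Qed.

Lemma encD x y : enc (op x y) = enc x :|: enc y.
Proof. by apply/setP => -[z|]; rewrite !inE ?le_join ?negb_and. Qed.

Lemma enc_inj : injective enc.
Proof.
move=> x y E.
have hx : Some x \notin enc y by rewrite -E inE le_refl.
have hy : Some y \notin enc x by rewrite E inE le_refl.
rewrite !inE !negbK in hx hy; exact: le_antisym.
Qed.

Lemma extend (P : X -> Prop) (psi : X -> X) :
  (forall x y, P x -> P y -> P (op x y)) ->
  (forall x y, P x -> P y -> psi (op x y) = op (psi x) (psi y)) ->
  exists g : option X -> {set option X},
    forall x, P x -> \bigcup_(z in enc x) g z = enc (psi x).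
Proof.
move=> Pop psiD.
exists (fun z => [set w | pb (forall x', P x' -> z \in enc x' -> w \in enc (psi x'))]).
move=> x Px; apply/setP => w; apply/bigcupP/idP.
- by case=> z zx; rewrite inE => /pbP H; exact: H.
- case: w => [w|] wx; last first.
    exists None; first exact: None_enc.
    by rewrite inE; apply/pbP => x' _ _; exact: None_enc.
  pose U := fun u => pb (P u) && le (psi u) w.
  case: (boolP [exists u, U u]) => [/existsP [u0 Uu0]|nex].
  + case: (arg_maxnP (fun u => #|enc u|) Uu0) => u /andP[/pbP Pu lu] umax.
    exists (Some u).
      rewrite in_enc; apply/negP => lxu.
      have : le (psi x) (psi u) by rewrite /le -psiD // (eqP lxu).
      move/le_trans/(_ lu); by rewrite in_enc in wx; apply/negP.
    rewrite inE; apply/pbP => x' Px' ux'.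
    rewrite in_enc; apply/negP => l'.
    have Uux : U (op u x').
      rewrite /U psiD // le_join lu l' andbT andbT; apply/pbP; exact: (Pop _ _ Pu Px').
    have := umax _ Uux; rewrite /= encD => hc.
    have E : enc u == enc u :|: enc x' by rewrite eqEcard subsetUl hc.
    have : enc x' \subset enc u by rewrite (eqP E) subsetUr.
    move/subsetP/(_ _ ux'); by rewrite in_enc le_refl.
  + exists None; first exact: None_enc.
    rewrite inE; apply/pbP => x' Px' _.
    rewrite in_enc; apply/negP => l'.
    move/existsPn: nex => /(_ x'); rewrite /U l' andbT => /negP; apply.
    exact/pbP.
Qed.

End Enc.

Section Bdef.
Variable T : finType.
Definition uadd (f : {ffun {set T} -> {set T}}) : bool :=
  [forall a, forall b, f (a :|: b) == f a :|: f b].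
Definition VT := {f : {ffun {set T} -> {set T}} | uadd f}.
Lemma uaddP (f : {ffun {set T} -> {set T}}) : reflect (forall a b, f (a :|: b) = f a :|: f b) (uadd f).
Proof.
apply: (iffP forallP) => H a.
- by move=> b; exact/eqP/(forallP (H a) b).
- by apply/forallP => b; apply/eqP/H.
Qed.
Lemma vmul_proof (v w : VT) : uadd [ffun a => val v (val w a)].
Proof. by apply/uaddP => a b; rewrite !ffunE (uaddP _ (valP w)) (uaddP _ (valP v)). Qed.
Definition vmul (v w : VT) : VT := exist uadd _ (vmul_proof v w).
Lemma vone_proof : uadd [ffun a => a].
Proof. by apply/uaddP => a b; rewrite !ffunE. Qed.
Definition vone : VT := exist uadd _ vone_proof.
Lemma vins_proof (h : {set T}) : uadd [ffun a => h :|: a].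
Proof. by apply/uaddP => a b; rewrite !ffunE setUUr. Qed.
Definition vins (h : {set T}) : VT := exist uadd _ (vins_proof h).
Definition vact (v : VT) (h : {set T}) : {set T} := val v h.
Definition Bops : fa_ops := @FAOps {set T} VT (@setU T) set0 vmul vone vact vins.

Lemma B_fa : is_forest_algebra Bops.
Proof.
split; first exact: setUA.
split; first exact: setUC.
split; first exact: set0U.
split; first exact: setUid.
split; first by move=> u v w; apply: val_inj; apply/ffunP => a; rewrite /= !ffunE.
split; first by move=> v; split; apply: val_inj; apply/ffunP => a; rewrite /= !ffunE.
split; first by move=> h; rewrite /= /vact /= ffunE.
split; first by move=> v w h; rewrite /= /vact /= ffunE.
split; first by move=> v w H; apply: val_inj; apply/ffunP => a; exact: H.
split; first by move=> h h'; rewrite /= /vact /= ffunE.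
by move=> h; exists (vins h); rewrite /= /vact /= ffunE setU0.
Qed.

Lemma B_dist : fa_distributive Bops.
Proof. by move=> v h1 h2; exact: (uaddP _ (valP v)). Qed.
End Bdef.

Lemma fill_fpc (S : Type) (s : forest S) (p : ctx S) (t : forest S) :
  fill (forest_plus_ctx s p) t = s ++ fill p t.
Proof. by case: p => [l r|l a c r] /=; rewrite ?cats0 !catA. Qed.

Lemma fill_cpf (S : Type) (s : forest S) (p : ctx S) (t : forest S) :
  fill (ctx_plus_forest p s) t = fill p t ++ s.
Proof. by case: p => [l r|l a c r] /=; rewrite -!catA. Qed.

Theorem mainTheorem5 (Sigma : finType) (A1 A2 : fa_ops)
    (alpha : fmorph Sigma A1) (beta : fmorph Sigma A2) :
  is_forest_algebra A1 -> is_forest_algebra A2 ->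
  is_surjective_morphism alpha -> is_surjective_morphism beta ->
  locally_distributive alpha beta ->
  exists B : fa_ops,
    is_forest_algebra B /\ fa_distributive B /\ divides alpha beta B.
Proof.
move=> FA1 FA2 [[a0 aD a1 aC aF] _ _] [[b0 bD b1 bC bF] _ _] LD.
case: FA1 => a1A [a1C [a10 [a1I [_ [_ [_ [act1M _]]]]]]].
case: FA2 => a2A [a2C [a20 [a2I _]]].
pose op := @half_sum A1 A2.
have opA : forall x y z, op x (op y z) = op (op x y) z.
  by move=> [? ?] [? ?] [? ?]; rewrite /op /half_sum /= a1A a2A.
have opC : forall x y, op x y = op y x.
  by move=> [? ?] [? ?]; rewrite /op /half_sum /= a1C a2C.
have opI : forall x, op x x = x.
  by move=> [? ?]; rewrite /op /half_sum /= a1I a2I.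
exists (Bops (option (faH A1 * faH A2))).
split; first exact: B_fa.
split; first exact: B_dist.
pose E := enc op.
pose KH := fun x : faH A1 * faH A2 => [set E x].
pose KV := fun h p h' => [set f : VT (option (faH A1 * faH A2)) |
  pb (forall x, is_half_arrow alpha beta x -> x.2 = h ->
        val f (E x) = E (arrow_act alpha p h' x))].
have KVP : forall h p h' (f : VT (option (faH A1 * faH A2))), reflect (forall x, is_half_arrow alpha beta x -> x.2 = h ->
        val f (E x) = E (arrow_act alpha p h' x)) (f \in KV h p h').
  by move=> h p h' f; rewrite inE; apply: pbP.
have HA : forall h p h' x, is_arrow beta h p h' -> is_half_arrow alpha beta x -> x.2 = h ->
    is_half_arrow alpha beta (arrow_act alpha p h' x).
  move=> h p h' [x1 x2] Ha [s [/= e1 e2]] /= ex.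
  by exists (fill p s); rewrite /= aF bF e1 e2 ex; split.
exists KH, KV.
split.
  by move=> x _; apply/set0Pn; exists (E x); rewrite inE.
split.
  move=> h p h' Harr.
  have Pop : forall x y, (is_half_arrow alpha beta x /\ x.2 = h) ->
      (is_half_arrow alpha beta y /\ y.2 = h) ->
      (is_half_arrow alpha beta (op x y) /\ (op x y).2 = h).
    move=> [x1 x2] [y1 y2] [[s [/= e1 e2]] /= ex] [[t [/= f1 f2]] /= ey]; split.
      by exists (s ++ t); rewrite /= aD bD e1 e2 f1 f2.
    by rewrite /= ex ey a2I.
  have psiD : forall x y, (is_half_arrow alpha beta x /\ x.2 = h) ->
      (is_half_arrow alpha beta y /\ y.2 = h) ->
      arrow_act alpha p h' (op x y) = op (arrow_act alpha p h' x) (arrow_act alpha p h' y).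
    by move=> x y [hx ex] [hy ey]; exact: LD h h' p Harr x y hx hy ex ey.
  have [g Hg] := extend opA opC opI Pop psiD.
  have fP : uadd [ffun Y : {set option (faH A1 * faH A2)} => \bigcup_(z in Y) g z].
    by apply/uaddP => a b; rewrite !ffunE bigcup_setU.
  apply/set0Pn; exists (exist (@uadd _) _ fP); apply/KVP => x hx ex.
  by rewrite /= ffunE; exact: Hg.
split.
  move=> h p q h' _ _ Heq.
  have AE : forall x, is_half_arrow alpha beta x -> x.2 = h ->
      arrow_act alpha p h' x = arrow_act alpha q h' x.
    move=> [x1 x2] [s [/= e1 e2]] /= ex.
    by rewrite /arrow_act /= -e1 -!aF Heq // e2 ex.
  apply/setP => f; apply/KVP/KVP => H x hx ex; by rewrite H // AE.
split.
  move=> h1 h2 h3 p q Hp Hq v w /KVP Hv /KVP Hw.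
  apply/KVP => x hx ex; rewrite /= ffunE (Hw x hx ex) Hv //; last exact: HA hx ex.
  by rewrite /arrow_act /= aC act1M.
split.
  move=> h p h' x Ha hx ex v k /KVP Hv; rewrite inE => /eqP ->.
  by rewrite inE; apply/eqP; exact: Hv.
split.
  move=> x y _ _ k l; rewrite !inE => /eqP -> /eqP ->; apply/eqP.
  by rewrite /E (encD opA opC opI).
split.
  move=> s h p h' Ha k v; rewrite inE => /eqP -> /KVP Hv; split; apply/KVP => x hx ex;
    rewrite /= !ffunE Hv // -(encD opA opC opI); [|rewrite opC]; congr E;
    case: x hx ex => x1 x2 [t [/= e1 e2]] /= ex;
    by rewrite /op /half_sum /arrow_act /= -e1 -!aF ?fill_fpc ?fill_cpf aD.
split.
  move=> h p q h' _ _ Hne; rewrite -setI_eq0; apply/eqP/setP => f; rewrite !inE.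
  apply/negP => /andP[/pbP H1 /pbP H2]; apply: Hne => s es.
  have hx : is_half_arrow alpha beta (mH alpha s, mH beta s) by exists s.
  have := H1 _ hx es; rewrite H2 // => /(enc_inj opC opI) [] H.
  by rewrite !aF H.
move=> x y _ _ _ Hne; rewrite disjoints1 inE; apply/negP => /eqP.
by move/(enc_inj opC opI).
Qed.
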